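(* For any $\mathbf{V}\in\mathbb{R}^{N\times N}$ with $\mathbf{V}\boldsymbol\mu=\boldsymbol\mu$, any $k\in[N]$ and any $t\in[T]$, $$\mathbb{E}[V_{x_o,x_t}\mid x_{T+1}=k]=q^{(k)}_t\langle\mathbf{V},\mathbf{P}\rangle_\mu+(1-q^{(k)}_t)\|\boldsymbol\mu\|^2.$$
   Context: Let $\mathbf{P}\in\mathbb{R}^{N\times N}$ have nonnegative entries with columns summing to $1$, and let $\boldsymbol\mu\in\mathbb{R}^N$ be a probability vector with $\mathbf{P}\boldsymbol\mu=\boldsymbol\mu$. Let $\mathbf{q}^{(1)},\dots,\mathbf{q}^{(N)}$ be probability vectors in $\mathbb{R}^T$. Random variables: $x_1,\dots,x_{T+1}$ i.i.d. with law $\boldsymbol\mu$ on $[N]$, and $x_o\in[N]$ with $\Pr(x_o=n\mid x_{T+1}=k,x_1,\dots,x_T)=\sum_{s=1}^Tq^{(k)}_sP_{n,x_s}$. For matrices $\mathbf{M},\mathbf{M}'$ with $N$ columns, $\langle\mathbf{M},\mathbf{M}'\rangle_\mu=\operatorname{Tr}(\mathbf{M}\operatorname{diag}(\boldsymbol\mu)\mathbf{M}'^\top)$; $\|\boldsymbol\mu\|$ is the Euclidean norm. *)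

(* Defs.v *)
From HB Require Import structures.
From mathcomp Require Import all_boot all_order all_algebra.
Set Implicit Arguments. Unset Strict Implicit. Unset Printing Implicit Defensive.
Import Order.TTheory GRing.Theory Num.Theory.
Local Open Scope ring_scope.

(* Indices: [N] = 'I_N, [T] = 'I_T (0-based).
   Sample space: (xs, xT1, xo) with xs : {ffun 'I_T -> 'I_N} = (x_1,...,x_T),
   xT1 = x_{T+1}, xo = x_o. *)

(* joint pmf: prod_s mu(x_s) * mu(x_{T+1}) * Pr(x_o = xo | x_{T+1}, x_1..x_T) *)
Definition joint (R : nzRingType) (N T : nat) (P : 'M[R]_N) (mu : 'cV[R]_N)
    (q : 'I_N -> 'cV[R]_T) (xs : {ffun 'I_T -> 'I_N}) (xT1 xo : 'I_N) : R :=
  (\prod_(s < T) mu (xs s) 0) * mu xT1 0 * (\sum_(s < T) q xT1 s 0 * P xo (xs s)).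

Definition cond_exp (R : fieldType) (N T : nat) (P : 'M[R]_N) (mu : 'cV[R]_N)
    (q : 'I_N -> 'cV[R]_T)
    (f : {ffun 'I_T -> 'I_N} -> 'I_N -> 'I_N -> R) (k : 'I_N) : R :=
  (\sum_(xs : {ffun 'I_T -> 'I_N}) \sum_(xT1 < N) \sum_(xo < N)
      (if xT1 == k then f xs xT1 xo * joint P mu q xs xT1 xo else 0))
  / (\sum_(xs : {ffun 'I_T -> 'I_N}) \sum_(xT1 < N) \sum_(xo < N)
      (if xT1 == k then joint P mu q xs xT1 xo else 0)).

Definition mu_inner (R : nzRingType) (N : nat) (mu : 'cV[R]_N) (M M' : 'M[R]_N) : R :=
  \tr (M *m diag_mx mu^T *m M'^T).

Definition enorm (R : rcfType) (N : nat) (v : 'cV[R]_N) : R :=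
  Num.sqrt (\sum_(i < N) v i 0 ^+ 2).

(* Main.v *)
Require Import Defs.
From HB Require Import structures.
From mathcomp Require Import all_boot all_order all_algebra.
Import Order.TTheory GRing.Theory Num.Theory.
Local Open Scope ring_scope.
From mathcomp Require Import ring.

Lemma Egen (R : comNzRingType) (N T : nat) (mu : 'I_N -> R) (t u : 'I_T)
   (g h : 'I_N -> R) : \sum_(i < N) mu i = 1 ->
  \sum_(xs : {ffun 'I_T -> 'I_N}) (\prod_(s < T) mu (xs s)) * g (xs t) * h (xs u)
  = if t == u then \sum_j mu j * g j * h j
    else (\sum_j mu j * g j) * (\sum_j mu j * h j).
Proof.
move=> Hmu.
pose a (s : 'I_T) (j : 'I_N) := mu j * ((if s == t then g j else 1) * (if s == u then h j else 1)).
have E1 : forall xs : {ffun 'I_T -> 'I_N}, (\prod_(s < T) mu (xs s)) * g (xs t) * h (xs u)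
    = \prod_(s < T) a s (xs s).
  move=> xs; rewrite /a big_split /= big_split /=.
  rewrite -!big_mkcond /= !big_pred1_eq mulrA //.
rewrite (eq_bigr _ (fun xs _ => E1 xs)) -bigA_distr_bigA /=.
rewrite (bigD1 t) //=.
have -> : \prod_(i < T | i != t) \sum_(j < N) a i j
   = \prod_(i < T | i != t) (if i == u then \sum_j mu j * h j else 1).
  apply: eq_bigr => s /negbTE st; rewrite /a st; case: (s == u).
    by apply: eq_bigr => j _; rewrite mul1r.
  by rewrite -[RHS]Hmu; apply: eq_bigr => j _; rewrite !mulr1.
rewrite -big_mkcondr /=.
case: eqP => [tu|/eqP tu].
  rewrite -tu [X in _ * X]big1 ?mulr1; last first.
    by move=> s /andP[/negbTE ns /eqP es]; rewrite es eqxx in ns.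
  by apply: eq_bigr => j _; rewrite /a -tu eqxx mulrA.
rewrite (big_pred1 u); last by move=> s /=; rewrite andb_idl // => /eqP ->; rewrite eq_sym.
congr (_ * _); apply: eq_bigr => j _;
  by rewrite /a eqxx ?(eq_sym u t) (negbTE tu) ?mul1r ?mulr1.
Qed.

Lemma pickk (R : nzRingType) (N : nat) (k : 'I_N) (F : 'I_N -> 'I_N -> R) :
  \sum_(x1 < N) \sum_(xo < N) (if x1 == k then F x1 xo else 0) = \sum_xo F k xo.
Proof.
rewrite (bigD1 k) //= [X in _ + X]big1 ?addr0.
  by apply: eq_bigr => o _; rewrite eqxx.
by move=> i /negbTE ik; apply: big1 => o _; rewrite ik.
Qed.

Theorem lemmaB6 (R : rcfType) (N T : nat) (P : 'M[R]_N) (mu : 'cV[R]_N)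
    (q : 'I_N -> 'cV[R]_T) :
  (forall i j, 0 <= P i j) ->
  (forall j, \sum_(i < N) P i j = 1) ->
  (forall i, 0 <= mu i 0) ->
  \sum_(i < N) mu i 0 = 1 ->
  P *m mu = mu ->
  (forall k s, 0 <= q k s 0) ->
  (forall k, \sum_(s < T) q k s 0 = 1) ->
  forall (V : 'M[R]_N), V *m mu = mu ->
  forall (k : 'I_N) (t : 'I_T), 0 < mu k 0 ->
  cond_exp P mu q (fun xs _ xo => V xo (xs t)) k
  = q k t 0 * mu_inner mu V P + (1 - q k t 0) * enorm mu ^+ 2.
Proof.
move=> P0 P1 mu0 mu1 Pmu q0 q1 V Vmu k t muk.
have E := @Egen R N T (fun j => mu j 0).
rewrite /cond_exp.
have G : forall f : {ffun 'I_T -> 'I_N} -> 'I_N -> R,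
  \sum_(xs : {ffun 'I_T -> 'I_N}) \sum_(xo < N) f xs xo * joint P mu q xs k xo
  = mu k 0 * \sum_(s < T) q k s 0 * \sum_(o < N) \sum_(xs : {ffun 'I_T -> 'I_N})
      (\prod_(s0 < T) mu (xs s0) 0) * f xs o * P o (xs s).
  move=> f.
  transitivity (\sum_(xs : {ffun 'I_T -> 'I_N}) \sum_(o < N) \sum_(s < T)
     mu k 0 * q k s 0 * ((\prod_(s0 < T) mu (xs s0) 0) * f xs o * P o (xs s))).
    apply: eq_bigr => xs _; apply: eq_bigr => o _.
    rewrite /joint !mulr_sumr; apply: eq_bigr => s _; ring.
  rewrite exchange_big /=.
  under eq_bigr do rewrite exchange_big /=.
  rewrite exchange_big /= mulr_sumr; apply: eq_bigr => s _.
  rewrite mulrA mulr_sumr; apply: eq_bigr => o _.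
  by rewrite mulr_sumr.
have Hmu : forall o, \sum_(j < N) mu j 0 * P o j = mu o 0.
  by move=> o; rewrite -{2}Pmu mxE; apply: eq_bigr => j _; rewrite mulrC.
have Hmv : forall o, \sum_(j < N) mu j 0 * V o j = mu o 0.
  by move=> o; rewrite -{2}Vmu mxE; apply: eq_bigr => j _; rewrite mulrC.
have Den : \sum_(xs : {ffun 'I_T -> 'I_N}) \sum_(x1 < N) \sum_(xo < N)
      (if x1 == k then joint P mu q xs x1 xo else 0) = mu k 0.
  rewrite (eq_bigr _ (fun (xs : {ffun 'I_T -> 'I_N}) _ => pickk _ _ k (fun x1 xo => joint P mu q xs x1 xo))).
  transitivity (\sum_(xs : {ffun 'I_T -> 'I_N}) \sum_(xo < N)
      (fun _ _ => 1) xs xo * joint P mu q xs k xo).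
    by apply: eq_bigr => xs _; apply: eq_bigr => o _; rewrite mul1r.
  rewrite G; transitivity (mu k 0 * \sum_(s < T) q k s 0 * 1); last first.
    by rewrite (eq_bigr _ (fun s _ => mulr1 (q k s 0))) q1 mulr1.
  congr (_ * _); apply: eq_bigr => s _; congr (_ * _).
  rewrite -[RHS]mu1; apply: eq_bigr => o _.
  have E' := E s s (fun _ => 1) (P o) mu1; rewrite /= eqxx in E'.
  rewrite E' -Hmu; apply: eq_bigr => j _; by rewrite mulr1.
have Num : \sum_(xs : {ffun 'I_T -> 'I_N}) \sum_(x1 < N) \sum_(xo < N)
      (if x1 == k then V xo (xs t) * joint P mu q xs x1 xo else 0)
    = mu k 0 * \sum_(s < T) q k s 0 * (if t == s then
        \sum_(o < N) \sum_(j < N) mu j 0 * V o j * P o j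
        else \sum_(o < N) mu o 0 ^+ 2).
  rewrite (eq_bigr _ (fun (xs : {ffun 'I_T -> 'I_N}) _ => pickk _ _ k (fun x1 xo => V xo (xs t) * joint P mu q xs x1 xo))).
  rewrite (G (fun xs xo => V xo (xs t))); congr (_ * _); apply: eq_bigr => s _.
  congr (_ * _).
  have E' : forall o, \sum_(xs : {ffun 'I_T -> 'I_N})
       (\prod_(s0 < T) mu (xs s0) 0) * V o (xs t) * P o (xs s)
     = if t == s then \sum_j mu j 0 * V o j * P o j
       else (\sum_j mu j 0 * V o j) * (\sum_j mu j 0 * P o j).
    by move=> o; exact: (E t s (V o) (P o) mu1).
  rewrite (eq_bigr _ (fun o _ => E' o)).
  case: (t == s) => //; apply: eq_bigr => o _; by rewrite Hmv Hmu expr2.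
rewrite Num Den mulrC mulrA mulVf ?mul1r; last by rewrite gt_eqF.
have Hin : mu_inner mu V P = \sum_(o < N) \sum_(j < N) mu j 0 * V o j * P o j.
  rewrite /mu_inner /mxtrace; apply: eq_bigr => o _.
  rewrite mxE; apply: eq_bigr => j _.
  by rewrite mul_mx_diag !mxE; ring.
have Hn : enorm mu ^+ 2 = \sum_(o < N) mu o 0 ^+ 2.
  by rewrite /enorm sqr_sqrtr // sumr_ge0 // => i _; rewrite sqr_ge0.
rewrite Hin Hn (bigD1 t) //= eqxx; congr (_ + _).
have Hq : 1 - q k t 0 = \sum_(s < T | s != t) q k s 0.
  by rewrite -(q1 k) (bigD1 t) //= addrC addrK.
rewrite Hq mulr_suml; apply: eq_bigr => s st.
by rewrite eq_sym (negbTE st).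
Qed.
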